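(* Let $N\ge1$, $z_1,\dots,z_N\in\mathbb{C}^*$, $n_1,\dots,n_N\in\mathbb{C}$, $z=z_1\cdots z_N$, and assume $z^2-z^{-2}\neq0$. Let $U=\mathrm{span}(a_1,\dots,a_N)$, $U'=\mathrm{span}(b_1,\dots,b_N)$ in $\mathrm{Cl}_N$, paired by $\langle a_j,b_i\rangle=\delta_{ij}$, and let \[ \Phi(X)=\sum_{i=1}^N z_1^{-1}\cdots z_{i-1}^{-1}z_{i+1}\cdots z_N\,a_i,\quad \Phi(Y)=\sum_{i=1}^N z_1^{-1}\cdots z_{i-1}^{-1}(z_i^2-z_i^{-2})z_{i+1}\cdots z_N\,b_i,\quad \Phi(G)=\sum_{i=1}^N(n_i+a_ib_i). \] Let $W=\{w\in U:\langle w,\Phi(Y)\rangle=0\}$, $W'=\{w'\in U':\langle\Phi(X),w'\rangle=0\}$, and let $\mathrm{Cl}_W\subset\mathrm{Cl}_N$ be the subalgebra generated by $W\cup W'$. Then the subalgebra of elements of $\mathrm{Cl}_W$ commuting with $\Phi(G)$ is the part of $\mathrm{Cl}_W$ of Euler degree $0$, i.e. the subalgebra generated by the products $ww'$ with $w\in W$, $w'\in W'$. Moreover, if $w_1,\dots,w_d$ is a basis of $W$ and $w'_1,\dots,w'_d$ is the basis of $W'$ with $\langle w_i,w'_j\rangle=\delta_{ij}$, then $E_{ij}\mapsto w_iw'_j$ (where $E_{ij}$ are the matrix units of $\mathfrak{gl}(W)\cong\mathfrak{gl}_d$) extends to an algebra homomorphism $U(\mathfrak{gl}(W))\to\mathrm{Cl}_W\subset\mathrm{Cl}_N$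 whose image is exactly this subalgebra.
   Context: $\mathrm{Cl}_N$ is the Clifford superalgebra over $\mathbb{C}$ generated by odd elements $a_1,\dots,a_N,b_1,\dots,b_N$ with relations $a_ia_j+a_ja_i=0$, $b_ib_j+b_jb_i=0$, $a_ib_j+b_ja_i=\delta_{ij}$. The Euler degree is the $\mathbb{Z}$-grading on $\mathrm{Cl}_N$ with $\deg a_i=1$, $\deg b_i=-1$. $U(\mathfrak{gl}(W))$ is the universal enveloping algebra of the Lie algebra $\mathfrak{gl}(W)$. *)

(* Defs.v *)
From HB Require Import structures.
From mathcomp Require Import all_boot all_order all_algebra.
From mathcomp Require Import complex.
From mathcomp Require Import reals Rstruct.
Set Implicit Arguments. Unset Strict Implicit. Unset Printing Implicit Defensive.
Import Order.TTheory GRing.Theory Num.Theory.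
Local Open Scope ring_scope.

Definition C : numClosedFieldType := (Rdefinitions.R)[i].

(* The Clifford algebra Cl_N, realised (faithfully: Cl_N is simple of   *)
(* dimension 2^(2N)) by its Fock representation on the exterior algebra *)
(* Lambda(C^N), whose basis is indexed by subsets S of {0..N-1}.        *)
(* a_k = wedge with e_k, b_k = contraction with e_k^*.                  *)

Definition fdim (N : nat) : nat := #|{set 'I_N}|.

Definition fset_of (N : nat) (i : 'I_(fdim N)) : {set 'I_N} := enum_val i.

Definition Cl (N : nat) := 'M[C]_(fdim N).

Definition ksign (N : nat) (k : 'I_N) (T : {set 'I_N}) : C :=
  (-1) ^+ #|[set j in T | (j < k)%N]|.

Definition gen_a (N : nat) (k : 'I_N) : Cl N :=
  \matrix_(i, j) (if (k \notin fset_of j) && (fset_of i == k |: fset_of j)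
                  then ksign k (fset_of j) else 0).

Definition gen_b (N : nat) (k : 'I_N) : Cl N :=
  \matrix_(i, j) (if (k \in fset_of j) && (fset_of i == fset_of j :\ k)
                  then ksign k (fset_of j) else 0).

(* x has Euler degree 0: it maps Lambda^p into Lambda^p for every p,
   i.e. its matrix entries between basis vectors of different exterior
   degree vanish (deg a_k = 1, deg b_k = -1). *)
Definition euler_deg0 (N : nat) (x : Cl N) : Prop :=
  forall i j : 'I_(fdim N), #|fset_of i| != #|fset_of j| -> x i j = 0.

Definition inU (N : nat) (u : 'I_N -> C) : Cl N := \sum_k u k *: gen_a k.
Definition inU' (N : nat) (v : 'I_N -> C) : Cl N := \sum_k v k *: gen_b k.

Definition pairing (N : nat) (u v : 'I_N -> C) : C := \sum_k u k * v k.

Inductive gen_alg (N : nat) (S : Cl N -> Prop) : Cl N -> Prop :=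
| ga_gen x : S x -> gen_alg S x
| ga_one : gen_alg S 1
| ga_add x y : gen_alg S x -> gen_alg S y -> gen_alg S (x + y)
| ga_scale (c : C) x : gen_alg S x -> gen_alg S (c *: x)
| ga_mul x y : gen_alg S x -> gen_alg S y -> gen_alg S (x * y).

Definition phiX_coef (N : nat) (z : 'I_N -> C) (i : 'I_N) : C :=
  (\prod_(j < N | (j < i)%N) (z j)^-1) * (\prod_(j < N | (i < j)%N) z j).
Definition phiY_coef (N : nat) (z : 'I_N -> C) (i : 'I_N) : C :=
  (\prod_(j < N | (j < i)%N) (z j)^-1) * ((z i) ^+ 2 - (z i) ^- 2)
  * (\prod_(j < N | (i < j)%N) z j).

Definition phiG (N : nat) (n : 'I_N -> C) : Cl N :=
  \sum_i (n i *: (1 : Cl N) + gen_a i * gen_b i : Cl N).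

Definition inW (N : nat) (z : 'I_N -> C) (u : 'I_N -> C) : Prop :=
  pairing u (phiY_coef z) = 0.
Definition inW' (N : nat) (z : 'I_N -> C) (v : 'I_N -> C) : Prop :=
  pairing (phiX_coef z) v = 0.

Definition ClW (N : nat) (z : 'I_N -> C) : Cl N -> Prop :=
  gen_alg (fun x => (exists2 u, inW z u & x = inU u) \/
                    (exists2 v, inW' z v & x = inU' v)).

Definition prodWW' (N : nat) (z : 'I_N -> C) (x : Cl N) : Prop :=
  exists u v, [/\ inW z u, inW' z v & x = inU u * inU' v].

Definition is_basis (N d : nat) (P : ('I_N -> C) -> Prop)
    (f : 'I_d -> 'I_N -> C) : Prop :=
  [/\ forall i, P (f i),
      (forall c : 'I_d -> C, (forall k, \sum_i c i * f i k = 0) ->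
          forall i, c i = 0) &
      (forall u, P u -> exists c : 'I_d -> C,
          forall k, u k = \sum_i c i * f i k)].

(* The assignment E_ij |-> e i j extends to an (associative, unital)
   algebra homomorphism U(gl_d) -> Cl_N iff it is a Lie algebra
   homomorphism gl_d -> Cl_N, i.e. iff the e i j satisfy the defining
   relations [E_ij, E_kl] = delta_jk E_il - delta_li E_kj
   (universal property of the universal enveloping algebra). *)
Definition gl_relations (N d : nat) (e : 'I_d -> 'I_d -> Cl N) : Prop :=
  forall i j k l : 'I_d,
    e i j * e k l - e k l * e i j =
      (if j == k then e i l else 0) - (if l == i then e k j else 0).

(* Main.v *)
Require Import Defs.
From HB Require Import structures.
From mathcomp Require Import all_boot all_order all_algebra.
From mathcomp Require Import complex.
From mathcomp Require Import reals Rstruct.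
From mathcomp Require Import ring zify.
Import Order.TTheory GRing.Theory Num.Theory.
Set Implicit Arguments. Unset Strict Implicit. Unset Printing Implicit Defensive.
Local Open Scope ring_scope.


Definition ent N (M : Cl N) (S T : {set 'I_N}) : C := M (enum_rank S) (enum_rank T).

Lemma fsetK N (S : {set 'I_N}) : fset_of (enum_rank S) = S.
Proof. by rewrite /fset_of enum_rankK. Qed.

Lemma ent_mul N (A B : Cl N) S T : ent (A * B) S T = \sum_U ent A S U * ent B U T.
Proof.
rewrite /ent mxE (reindex (@enum_rank _)) //.
exists enum_val => x _; [exact: enum_rankK | exact: enum_valK].
Qed.

Lemma ent_eq N (A B : Cl N) : (forall S T, ent A S T = ent B S T) -> A = B.
Proof.
move=> H; apply/matrixP => i j; rewrite -(enum_valK i) -(enum_valK j); exact: H.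
Qed.

Lemma ent_add N (A B : Cl N) S T : ent (A + B) S T = ent A S T + ent B S T.
Proof. by rewrite /ent mxE. Qed.
Lemma ent_scale N c (A : Cl N) S T : ent (c *: A) S T = c * ent A S T.
Proof. by rewrite /ent mxE. Qed.
Lemma ent1 N S T : ent (1 : Cl N) S T = (S == T)%:R.
Proof. by rewrite /ent mxE (inj_eq (@enum_rank_inj _)). Qed.
Lemma ent0 N S T : ent (0 : Cl N) S T = 0.
Proof. by rewrite /ent mxE. Qed.

Lemma ent_a N (k : 'I_N) S T : ent (gen_a k) S T =
  if S == k |: T then (if k \notin T then ksign k T else 0) else 0.
Proof. rewrite /ent mxE !fsetK. by case: (k \in T); case: (S == _). Qed.
Lemma ent_b N (k : 'I_N) S T : ent (gen_b k) S T =
  if S == T :\ k then (if k \in T then ksign k T else 0) else 0.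
Proof. rewrite /ent mxE !fsetK. by case: (k \in T); case: (S == _). Qed.

Lemma sum_pick N (F : {set 'I_N} -> C) V :
  \sum_U F U * (if U == V then 1 else 0) = F V.
Proof.
rewrite (bigD1 V) //= eqxx mulr1 big1 ?addr0 // => U /negbTE ->; by rewrite mulr0.
Qed.

Lemma ent_Ma N (A : Cl N) (k : 'I_N) S T : ent (A * gen_a k) S T =
  ent A S (k |: T) * (if k \notin T then ksign k T else 0).
Proof.
rewrite ent_mul -(sum_pick (fun U => ent A S U * (if k \notin T then ksign k T else 0))).
apply: eq_bigr => U _; rewrite ent_a; case: (U == _); by rewrite ?mulr0 ?mulr1 ?mul0r.
Qed.
Lemma ent_Mb N (A : Cl N) (k : 'I_N) S T : ent (A * gen_b k) S T =
  ent A S (T :\ k) * (if k \in T then ksign k T else 0).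
Proof.
rewrite ent_mul -(sum_pick (fun U => ent A S U * (if k \in T then ksign k T else 0))).
apply: eq_bigr => U _; rewrite ent_b; case: (U == _); by rewrite ?mulr0 ?mulr1 ?mul0r.
Qed.

Lemma sgn_sq (b : bool) : ((-1) ^+ b) * ((-1) ^+ b) = 1 :> C.
Proof. by case: b; rewrite ?expr0 ?expr1 ?mulr1 ?mulrNN ?mulr1. Qed.

Lemma ksignU N (k j : 'I_N) (T : {set 'I_N}) : j \notin T ->
  ksign k (j |: T) = (-1) ^+ (j < k)%N * ksign k T.
Proof.
move=> jT; rewrite /ksign -exprD; congr (_ ^+ _).
have -> : [set x in j |: T | (x < k)%N] =
   if (j < k)%N then j |: [set x in T | (x < k)%N] else [set x in T | (x < k)%N].
  apply/setP => x; case: (ltnP j k) => jk; rewrite !inE;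
  case: (eqVneq x j) => [->|] //=; rewrite ?jk ?(negbTE jT) // ?(leqNgt k j) ?jk //; by rewrite ltnNge jk.
case: (ltnP j k) => //= _; rewrite cardsU1 inE (negbTE jT) //.
Qed.

Lemma ksignD N (k j : 'I_N) (T : {set 'I_N}) : j \in T ->
  ksign k (T :\ j) = (-1) ^+ (j < k)%N * ksign k T.
Proof.
move=> jT; have -> : ksign k T = ksign k (j |: (T :\ j)) by rewrite setD1K.
by rewrite ksignU ?setD11 // mulrA sgn_sq mul1r.
Qed.

Lemma ksign_self_U N (k : 'I_N) (T : {set 'I_N}) : ksign k (k |: T) = ksign k T.
Proof.
case: (boolP (k \in T)) => kT; first by rewrite (setUidPr _) // sub1set.
by rewrite ksignU // ltnn expr0 mul1r.
Qed.
Lemma ksign_self_D N (k : 'I_N) (T : {set 'I_N}) : ksign k (T :\ k) = ksign k T.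
Proof.
case: (boolP (k \in T)) => kT; first by rewrite ksignD // ltnn expr0 mul1r.
by rewrite (setDidPl _) // disjoint_sym disjoints1.
Qed.
Lemma ksign_sq N (k : 'I_N) (T : {set 'I_N}) : ksign k T * ksign k T = 1.
Proof. by rewrite /ksign -exprD addnn -mul2n exprM sqrrN expr1n expr1n. Qed.


Lemma sgn_opp N (i j : 'I_N) : i != j ->
  (-1) ^+ (j < i)%N + (-1) ^+ (i < j)%N = 0 :> C.
Proof.
move=> ij; case: (ltngtP i j) => h; rewrite ?expr0 ?expr1 ?addrN ?subrr //.
  by rewrite addrC subrr.
by move: ij; rewrite (val_inj h) eqxx.
Qed.

Lemma rel_aa N (i j : 'I_N) : gen_a i * gen_a j + gen_a j * gen_a i = 0.
Proof.
apply: ent_eq => S T; rewrite ent_add !ent_Ma !ent_a ent0.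
case: (eqVneq i j) => [<-|ij].
  by rewrite setU11 /= !if_same !mul0r addr0.
rewrite !in_setU1 (eq_sym j i) (negbTE ij) /=.
case: (boolP (j \in T)) => jT /=.
  by rewrite !if_same mulr0 mul0r addr0.
case: (boolP (i \in T)) => iT /=.
  by rewrite !if_same mulr0 mul0r addr0.
rewrite setUCA; case: (S == _); last by rewrite !mul0r addr0.
rewrite !ksignU //.
transitivity (ksign i T * ksign j T * ((-1) ^+ (j < i)%N + (-1) ^+ (i < j)%N)).
  ring.
by rewrite sgn_opp // mulr0.
Qed.

Lemma rel_bb N (i j : 'I_N) : gen_b i * gen_b j + gen_b j * gen_b i = 0.
Proof.
apply: ent_eq => S T; rewrite ent_add !ent_Mb !ent_b ent0.
case: (eqVneq i j) => [<-|ij].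
  by rewrite setD11 /= !if_same !mul0r addr0.
rewrite !in_setD1 (eq_sym j i) (negbTE ij) /=.
case: (boolP (j \in T)) => jT /=; last first.
  by rewrite !if_same mulr0 mul0r addr0.
case: (boolP (i \in T)) => iT /=; last first.
  by rewrite !if_same mulr0 mul0r addr0.
rewrite !setDDl setUC; case: (S == _); last by rewrite !mul0r addr0.
rewrite !ksignD //.
transitivity (ksign i T * ksign j T * ((-1) ^+ (j < i)%N + (-1) ^+ (i < j)%N)).
  ring.
by rewrite sgn_opp // mulr0.
Qed.

Lemma rel_ab N (i j : 'I_N) :
  gen_a i * gen_b j + gen_b j * gen_a i = if i == j then 1 else 0.
Proof.
apply: ent_eq => S T; rewrite ent_add ent_Mb ent_Ma ent_a ent_b.
case: (eqVneq i j) => [<-|ij].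
  rewrite ent1 setU11 setD11 /=.
  case: (boolP (i \in T)) => iT /=.
    rewrite setD1K // ksign_self_D mulr0 addr0; case: (S == T); rewrite ?mul0r // ksign_sq //.
  by rewrite setU1K // ksign_self_U mulr0 add0r; case: (S == T); rewrite ?mul0r // ksign_sq.
rewrite ent0 in_setD1 in_setU1 (negbTE ij) (eq_sym j i) (negbTE ij) /=.
have -> : (i |: T) :\ j = i |: (T :\ j).
  apply/setP => x; rewrite !inE; case: (eqVneq x i) => [->|] //=.
  by rewrite ij.
case: (boolP (j \in T)) => jT /=; last by rewrite !mulr0 add0r !if_same mul0r.
case: (boolP (i \in T)) => iT /=; first by rewrite !if_same mul0r mulr0 addr0.
case: (S == _); last by rewrite !mul0r addr0.
rewrite ksignD // ksignU //.
transitivity (ksign i T * ksign j T * ((-1) ^+ (j < i)%N + (-1) ^+ (i < j)%N)).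
  ring.
by rewrite sgn_opp // mulr0.
Qed.

Lemma rel_abb N (i : 'I_N) S T : ent (gen_a i * gen_b i) S T =
  if (S == T) && (i \in T) then 1 else 0.
Proof.
rewrite ent_Mb ent_a setD11 /=.
case: (boolP (i \in T)) => iT /=; last by rewrite mulr0 andbF.
by rewrite setD1K // ksign_self_D andbT; case: (S == T); rewrite ?mul0r // ksign_sq.
Qed.


Lemma sAl N (c:C) (x y : Cl N) : c *: (x * y) = (c *: x) * y.
Proof. exact: scalemxAl. Qed.
Lemma sAr N (c:C) (x y : Cl N) : c *: (x * y) = x * (c *: y).
Proof. exact: scalemxAr. Qed.
Lemma sAlr N (c d:C) (x y : Cl N) : (c *: x) * (d *: y) = (c * d) *: (x * y).
Proof. by rewrite -sAl -sAr scalerA. Qed.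

Lemma mul_sums N (I J : Type) (r1 : seq I) (r2 : seq J) (F : I -> Cl N) (G : J -> Cl N) :
  (\sum_(k <- r1) F k) * (\sum_(l <- r2) G l) = \sum_(k <- r1) \sum_(l <- r2) F k * G l.
Proof. rewrite mulr_suml; apply: eq_bigr => k _; by rewrite mulr_sumr. Qed.

Lemma rel_UU N (u u' : 'I_N -> C) : inU u * inU u' + inU u' * inU u = 0.
Proof.
rewrite /inU !mul_sums [X in _ + X]exchange_big /=.
rewrite -big_split /=; apply: big1 => k _; rewrite -big_split /=; apply: big1 => l _.
by rewrite !sAlr (mulrC (u' l)) -scalerDr rel_aa scaler0.
Qed.

Lemma rel_U'U' N (u u' : 'I_N -> C) : inU' u * inU' u' + inU' u' * inU' u = 0.
Proof.
rewrite /inU' !mul_sums [X in _ + X]exchange_big /=.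
rewrite -big_split /=; apply: big1 => k _; rewrite -big_split /=; apply: big1 => l _.
by rewrite !sAlr (mulrC (u' l)) -scalerDr rel_bb scaler0.
Qed.

Lemma rel_UU' N (u v : 'I_N -> C) :
  inU u * inU' v + inU' v * inU u = pairing u v *: (1 : Cl N).
Proof.
rewrite /inU /inU' !mul_sums [X in _ + X]exchange_big /=.
rewrite -big_split /= /pairing scaler_suml; apply: eq_bigr => k _; rewrite -big_split /=.
rewrite (bigD1 k) //= big1 ?addr0.
  by rewrite !sAlr (mulrC (v k)) -scalerDr rel_ab eqxx.
by move=> l /negbTE lk; rewrite !sAlr (mulrC (v l)) -scalerDr rel_ab eq_sym lk scaler0.
Qed.

Definition homd N (d : int) (x : Cl N) : Prop :=
  forall S T : {set 'I_N}, (#|S|%:Z - #|T|%:Z != d) -> ent x S T = 0.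

Lemma ent_sum N (I : Type) (r : seq I) (P : pred I) (F : I -> Cl N) S T :
  ent (\sum_(i <- r | P i) F i) S T = \sum_(i <- r | P i) ent (F i) S T.
Proof. by rewrite /ent summxE. Qed.

Lemma hom_add N d (x y : Cl N) : homd d x -> homd d y -> homd d (x + y).
Proof. by move=> hx hy S T h; rewrite ent_add hx ?hy ?addr0. Qed.
Lemma hom_scale N d c (x : Cl N) : homd d x -> homd d (c *: x).
Proof. by move=> hx S T h; rewrite ent_scale hx ?mulr0. Qed.
Lemma hom0 N d : homd d (0 : Cl N).
Proof. by move=> S T _; rewrite ent0. Qed.
Lemma hom_sum N d (I : Type) (r : seq I) (P : pred I) (F : I -> Cl N) :
  (forall i, P i -> homd d (F i)) -> homd d (\sum_(i <- r | P i) F i).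
Proof.
move=> H; elim/big_ind: _ => //; [exact: hom0 | exact: hom_add].
Qed.
Lemma hom1 N : homd 0 (1 : Cl N).
Proof. move=> S T h; rewrite ent1; case: eqP => // e; by move: h; rewrite e subrr eqxx. Qed.

Lemma hom_mul N d e (x y : Cl N) : homd d x -> homd e y -> homd (d + e) (x * y).
Proof.
move=> hx hy S T h; rewrite ent_mul; apply: big1 => U _.
case: (eqVneq (#|S|%:Z - #|U|%:Z) d) => h1; last by rewrite hx ?mul0r.
rewrite hy ?mulr0 //; apply: contra h => /eqP h2.
by rewrite -h1 -h2 addrA subrK.
Qed.

Lemma hom_a N (k : 'I_N) : homd 1 (gen_a k).
Proof.
move=> S T h; rewrite ent_a; case: eqP => // e; case: (boolP (k \in T)) => //= kT.
by move: h; rewrite e cardsU1 kT /= add1n -addn1 PoszD addrAC subrr add0r eqxx.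
Qed.
Lemma hom_b N (k : 'I_N) : homd (-1) (gen_b k).
Proof.
move=> S T h; rewrite ent_b; case: eqP => // e; case: (boolP (k \in T)) => //= kT.
by move: h; rewrite e [in #|T|](cardsD1 k) kT /= add1n -addn1 PoszD opprD addrA subrr add0r eqxx.
Qed.
Lemma hom_inU N (u : 'I_N -> C) : homd 1 (inU u).
Proof. apply: hom_sum => k _; apply: hom_scale; exact: hom_a. Qed.
Lemma hom_inU' N (u : 'I_N -> C) : homd (-1) (inU' u).
Proof. apply: hom_sum => k _; apply: hom_scale; exact: hom_b. Qed.

Lemma deg0_hom N (x : Cl N) : euler_deg0 x <-> homd 0 x.
Proof.
split=> h.
  move=> S T hST; rewrite /ent; apply: h; rewrite !fsetK.
  by apply: contra hST => /eqP ->; rewrite subrr.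
move=> i j hij; have := h (fset_of i) (fset_of j); rewrite /ent /fset_of !enum_valK; apply.
by rewrite subr_eq0 eqz_nat.
Qed.


Definition projk N (k : int) (x : Cl N) : Cl N :=
  \matrix_(i, j) if #|fset_of i|%:Z - #|fset_of j|%:Z == k then x i j else 0.

Lemma ent_proj N k (x : Cl N) S T :
  ent (projk k x) S T = if #|S|%:Z - #|T|%:Z == k then ent x S T else 0.
Proof. by rewrite /ent mxE !fsetK. Qed.

Lemma proj_hom N k (x : Cl N) : homd k (projk k x).
Proof. by move=> S T h; rewrite ent_proj (negbTE h). Qed.

Lemma proj_homE N d k (x : Cl N) : homd d x -> projk k x = if d == k then x else 0.
Proof.
move=> hx; apply: ent_eq => S T; rewrite ent_proj.
case: (eqVneq d k) => [<-|dk]; case: eqP => // e.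
- by rewrite hx //; apply/eqP.
- by rewrite ent0 hx // e eq_sym.
- by rewrite ent0.
Qed.

Lemma proj_add N k (x y : Cl N) : projk k (x + y) = projk k x + projk k y.
Proof. apply: ent_eq => S T; rewrite !(ent_add, ent_proj); by case: ifP; rewrite ?addr0. Qed.
Lemma proj_scale N k c (x : Cl N) : projk k (c *: x) = c *: projk k x.
Proof. apply: ent_eq => S T; rewrite !(ent_scale, ent_proj); by case: ifP; rewrite ?mulr0. Qed.
Lemma proj0 N k : projk k (0 : Cl N) = 0.
Proof. apply: ent_eq => S T; rewrite ent_proj ent0; by case: ifP. Qed.
Lemma proj_sum N k (I : Type) (r : seq I) (P : pred I) (F : I -> Cl N) :
  projk k (\sum_(i <- r | P i) F i) = \sum_(i <- r | P i) projk k (F i).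
Proof.
elim/big_rec2: _ => [|i y1 y2 _ <-]; [exact: proj0 | exact: proj_add].
Qed.

Lemma card_le N (S : {set 'I_N}) : (#|S| <= N)%N.
Proof. by rewrite -[X in (_ <= X)%N]card_ord max_card. Qed.

Lemma decomp N (x : Cl N) : x = \sum_(m < (N + N).+1) projk (m%:Z - N%:Z) x.
Proof.
apply: ent_eq => S T; rewrite ent_sum.
have hS := card_le S; have hT := card_le T.
have hm : (#|S| + N - #|T| < (N + N).+1)%N by lia.
rewrite (bigD1 (Ordinal hm)) //= big1 ?addr0.
  rewrite ent_proj /=; case: eqP => // e; exfalso; apply: e.
  rewrite -subzn; last by rewrite (leq_trans hT) // leq_addl. rewrite PoszD; ring.
move=> m hm'; rewrite ent_proj; case: eqP => // e.
have e' : (m : nat)%:Z = #|S|%:Z - #|T|%:Z + N%:Z by rewrite e; ring.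
case/eqP: hm'; apply: val_inj => /=; apply/eqP; rewrite -eqz_nat -subzn ?(leq_trans hT) ?leq_addl // PoszD e'; apply/eqP; ring.
Qed.

Lemma proj_mul N k (x y : Cl N) :
  projk k (x * y) = \sum_(m < (N + N).+1) \sum_(m' < (N + N).+1)
     (if (m%:Z - N%:Z) + (m'%:Z - N%:Z) == k then projk (m%:Z - N%:Z) x * projk (m'%:Z - N%:Z) y else 0).
Proof.
rewrite {1}(decomp x) {1}(decomp y) mul_sums proj_sum; apply: eq_bigr => m _.
rewrite proj_sum; apply: eq_bigr => m' _.
by rewrite (proj_homE _ (hom_mul (@proj_hom _ _ x) (@proj_hom _ _ y))).
Qed.

Lemma ent_phiG N (n : 'I_N -> C) S T :
  ent (phiG n) S T = if S == T then \sum_i n i + #|T|%:R else 0.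
Proof.
rewrite /phiG ent_sum.
under eq_bigr => i _ do rewrite ent_add ent_scale ent1 rel_abb.
case: (eqVneq S T) => [e|ne]; first subst S.
  rewrite big_split /=; congr (_ + _).
    by apply: eq_bigr => i _; rewrite mulr1.
  by rewrite -big_mkcond /= sumr_const.
by apply: big1 => i _; rewrite mulr0 add0r.
Qed.

Lemma comm_phiG N (n : 'I_N -> C) (x : Cl N) :
  x * phiG n = phiG n * x <-> homd 0 x.
Proof.
have eR : forall S T, ent (x * phiG n) S T = ent x S T * (\sum_i n i + #|T|%:R).
  move=> S T; rewrite ent_mul (bigD1 T) //= ent_phiG eqxx [X in _ + X]big1 ?addr0 //.
  by move=> U /negbTE hU; rewrite ent_phiG hU mulr0.
have eL : forall S T, ent (phiG n * x) S T = (\sum_i n i + #|S|%:R) * ent x S T.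
  move=> S T; rewrite ent_mul (bigD1 S) //= ent_phiG eqxx [X in _ + X]big1 ?addr0 //.
  by move=> U /negbTE hU; rewrite ent_phiG eq_sym hU mul0r.
split.
  move=> e S T h; have := congr1 (fun M => ent M S T) e; rewrite /= eR eL => e2.
  have : ent x S T * (#|T|%:R - #|S|%:R) = 0.
    have -> : ent x S T * (#|T|%:R - #|S|%:R) = ent x S T * (\sum_i n i + #|T|%:R) - (\sum_i n i + #|S|%:R) * ent x S T by ring.
    by rewrite e2 subrr.
  move/eqP; rewrite mulf_eq0 => /orP [/eqP //|]; rewrite subr_eq0 eqr_nat => /eqP e3.
  by move: h; rewrite e3 subrr eqxx.
move=> h; apply: ent_eq => S T; rewrite eR eL.
case: (eqVneq #|S| #|T|) => e; first by rewrite e mulrC.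
by rewrite h ?mulr0 ?mul0r // subr_eq0 eqz_nat.
Qed.


Inductive span N (S : Cl N -> Prop) : Cl N -> Prop :=
| sp_in x : S x -> span S x
| sp0 : span S 0
| sp_add x y : span S x -> span S y -> span S (x + y)
| sp_scale (c : C) x : span S x -> span S (c *: x).

Definition subsp N (T : Cl N -> Prop) :=
  [/\ T 0, (forall x y, T x -> T y -> T (x + y)) & (forall c x, T x -> T (c *: x))].

Lemma span_sub N (S : Cl N -> Prop) : subsp (span S).
Proof. split; [exact: sp0 | exact: sp_add | exact: sp_scale]. Qed.

Lemma gen_sub N (S : Cl N -> Prop) : subsp (gen_alg S).
Proof.
split; [|exact: ga_add | exact: ga_scale].
by rewrite -(scale0r (1 : Cl N)); apply: ga_scale; apply: ga_one.
Qed.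

Lemma subsp_sum N (T : Cl N -> Prop) (I : Type) (r : seq I) (P : pred I) F :
  subsp T -> (forall i, P i -> T (F i)) -> T (\sum_(i <- r | P i) F i).
Proof. by case=> h0 hD _ hF; elim/big_ind: _ => //. Qed.

Lemma span_lin N (S T : Cl N -> Prop) (f : Cl N -> Cl N) :
  f 0 = 0 -> (forall x y, f (x + y) = f x + f y) -> (forall c x, f (c *: x) = c *: f x) ->
  subsp T -> (forall s, S s -> T (f s)) -> forall y, span S y -> T (f y).
Proof.
move=> f0 fD fZ [T0 TD TZ] hS y; elim => //.
- by rewrite f0.
- by move=> a b _ ha _ hb; rewrite fD; apply: TD.
- by move=> c a _ ha; rewrite fZ; apply: TZ.
Qed.

Lemma span_ml N (S T : Cl N -> Prop) (x : Cl N) :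
  subsp T -> (forall s, S s -> T (x * s)) -> forall y, span S y -> T (x * y).
Proof.
move=> hT hS; apply: (span_lin (f := fun y => x * y)) => //.
- exact: mulr0.
- by move=> a b; rewrite mulrDr.
- by move=> c a; rewrite sAr.
Qed.

Lemma span_mr N (S T : Cl N -> Prop) (x : Cl N) :
  subsp T -> (forall s, S s -> T (s * x)) -> forall y, span S y -> T (y * x).
Proof.
move=> hT hS; apply: (span_lin (f := fun y => y * x)) => //.
- exact: mul0r.
- by move=> a b; rewrite mulrDl.
- by move=> c a; rewrite sAl.
Qed.


Definition G0 N (Wp Wp' : ('I_N -> C) -> Prop) :=
  gen_alg (fun x : Cl N => exists u v, [/\ Wp u, Wp' v & x = inU u * inU' v]).

Fixpoint Pn N (Wp Wp' : ('I_N -> C) -> Prop) (n : nat) : Cl N -> Prop :=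
  match n with
  | 0 => G0 Wp Wp'
  | m.+1 => span (fun x => exists u y, [/\ Wp u, Pn Wp Wp' m y & x = inU u * y])
  end.

Fixpoint Qn N (Wp Wp' : ('I_N -> C) -> Prop) (n : nat) : Cl N -> Prop :=
  match n with
  | 0 => G0 Wp Wp'
  | m.+1 => span (fun x => exists v y, [/\ Wp' v, Qn Wp Wp' m y & x = y * inU' v])
  end.

Definition An N (Wp Wp' : ('I_N -> C) -> Prop) (k : int) : Cl N -> Prop :=
  match k with Posz n => Pn Wp Wp' n | Negz n => Qn Wp Wp' n.+1 end.

Definition Sp' N (Wp Wp' : ('I_N -> C) -> Prop) :=
  span (fun x : Cl N => exists v y, [/\ Wp' v, G0 Wp Wp' y & x = inU' v * y]).

Lemma Pn_sub N Wp Wp' n : subsp (@Pn N Wp Wp' n).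
Proof. case: n => [|n]; [exact: gen_sub | exact: span_sub]. Qed.
Lemma Qn_sub N Wp Wp' n : subsp (@Qn N Wp Wp' n).
Proof. case: n => [|n]; [exact: gen_sub | exact: span_sub]. Qed.
Lemma An_sub N Wp Wp' k : subsp (@An N Wp Wp' k).
Proof. case: k => n; [exact: Pn_sub | exact: Qn_sub]. Qed.

Lemma vu N (u v : 'I_N -> C) : inU' v * inU u = pairing u v *: (1 : Cl N) - inU u * inU' v.
Proof. by rewrite -(rel_UU' u v) [X in X - _]addrC addrK. Qed.
Lemma uu N (u u' : 'I_N -> C) : inU u * inU u' = - (inU u' * inU u).
Proof. by apply/eqP; rewrite -addr_eq0 rel_UU. Qed.
Lemma vv N (u u' : 'I_N -> C) : inU' u * inU' u' = - (inU' u' * inU' u).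
Proof. by apply/eqP; rewrite -addr_eq0 rel_U'U'. Qed.

Lemma id_C1 N (u1 v1 u : 'I_N -> C) :
  inU u1 * inU' v1 * inU u = pairing u v1 *: (inU u1 * 1) + inU u * (inU u1 * inU' v1).
Proof.
by rewrite -mulrA vu mulrBr -sAr mulrA uu mulNr mulrA.
Qed.

Lemma id_C2 N (u1 v1 v : 'I_N -> C) :
  inU u1 * inU' v1 * inU' v = inU' v * (inU u1 * inU' v1) - pairing u1 v *: (inU' v1 * 1).
Proof.
rewrite -mulrA vv mulrN [in RHS]mulrA vu mulrBl -sAl mul1r mulr1 mulrA.
by rewrite addrAC subrr add0r.
Qed.

Lemma G0_mul N Wp Wp' (x y : Cl N) : G0 Wp Wp' x -> G0 Wp Wp' y -> G0 Wp Wp' (x * y).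
Proof. exact: ga_mul. Qed.
Lemma G0_1 N Wp Wp' : @G0 N Wp Wp' 1.
Proof. exact: ga_one. Qed.

Lemma P1_rG0 N Wp Wp' (y g : Cl N) : Pn Wp Wp' 1 y -> G0 Wp Wp' g -> Pn Wp Wp' 1 (y * g).
Proof.
move=> hy hg; move: y hy; apply: span_mr; first exact: span_sub.
move=> s [u [y' [hu hy' ->]]]; apply: sp_in; exists u, (y' * g); split=> //.
  exact: G0_mul. by rewrite mulrA.
Qed.

Lemma Sp'_rG0 N Wp Wp' (y g : Cl N) : Sp' Wp Wp' y -> G0 Wp Wp' g -> Sp' Wp Wp' (y * g).
Proof.
move=> hy hg; move: y hy; apply: span_mr; first exact: span_sub.
move=> s [u [y' [hu hy' ->]]]; apply: sp_in; exists u, (y' * g); split=> //.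
  exact: G0_mul. by rewrite mulrA.
Qed.

Lemma C1 N Wp Wp' (g : Cl N) : G0 Wp Wp' g -> forall u, Wp u -> Pn Wp Wp' 1 (g * inU u).
Proof.
elim=> {g}.
- move=> g [u1 [v1 [h1 h2 ->]]] u hu; rewrite id_C1.
  apply: sp_add.
  + apply: sp_scale; apply: sp_in; exists u1, 1; split=> //; exact: G0_1.
  + apply: sp_in; exists u, (inU u1 * inU' v1); split=> //; apply: ga_gen; by exists u1, v1.
- move=> u hu; rewrite mul1r -(mulr1 (inU u)); apply: sp_in; exists u, 1; split=> //; exact: G0_1.
- by move=> x y _ hx _ hy u hu; rewrite mulrDl; apply: sp_add; [apply: hx | apply: hy].
- by move=> c x _ hx u hu; rewrite -sAl; apply: sp_scale; apply: hx.
- move=> x y hx0 hx _ hy u hu; rewrite -mulrA.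
  move: (hy u hu); apply: span_ml; first exact: span_sub.
  move=> s [u' [y' [hu' hy' ->]]]; rewrite mulrA; apply: P1_rG0 => //; exact: hx.
Qed.

Lemma C2 N Wp Wp' (g : Cl N) : G0 Wp Wp' g -> forall v, Wp' v -> Sp' Wp Wp' (g * inU' v).
Proof.
elim=> {g}.
- move=> g [u1 [v1 [h1 h2 ->]]] v hv; rewrite id_C2.
  rewrite -scaleNr; apply: sp_add.
  + apply: sp_in; exists v, (inU u1 * inU' v1); split=> //; apply: ga_gen; by exists u1, v1.
  + apply: sp_scale; apply: sp_in; exists v1, 1; split=> //; exact: G0_1.
- move=> v hv; rewrite mul1r -(mulr1 (inU' v)); apply: sp_in; exists v, 1; split=> //; exact: G0_1.
- by move=> x y _ hx _ hy u hu; rewrite mulrDl; apply: sp_add; [apply: hx | apply: hy].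
- by move=> c x _ hx u hu; rewrite -sAl; apply: sp_scale; apply: hx.
- move=> x y hx0 hx _ hy u hu; rewrite -mulrA.
  move: (hy u hu); apply: span_ml; first exact: span_sub.
  move=> s [u' [y' [hu' hy' ->]]]; rewrite mulrA; apply: Sp'_rG0 => //; exact: hx.
Qed.


Lemma P_W N Wp Wp' n (y : Cl N) u : Pn Wp Wp' n y -> Wp u -> Pn Wp Wp' n.+1 (y * inU u).
Proof.
elim: n y => [|n IH] y hy hu; first exact: C1.
move: y hy; apply: span_mr; first exact: span_sub.
move=> s [u' [y' [hu' hy' ->]]]; rewrite -mulrA; apply: sp_in; exists u', (y' * inU u); split=> //.
exact: IH.
Qed.

Lemma P_W' N Wp Wp' n (y : Cl N) v : Pn Wp Wp' n.+1 y -> Wp' v -> Pn Wp Wp' n (y * inU' v).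
Proof.
elim: n y => [|n IH] y hy hv.
  move: y hy; apply: span_mr; first exact: gen_sub.
  move=> s [u' [g [hu' hg ->]]]; rewrite -mulrA.
  move: (C2 hg hv); apply: span_ml; first exact: gen_sub.
  move=> s' [v' [g' [hv' hg' ->]]]; rewrite mulrA; apply: ga_mul => //.
  apply: ga_gen; by exists u', v'.
move: y hy; apply: span_mr; first exact: span_sub.
move=> s [u' [y' [hu' hy' ->]]]; rewrite -mulrA; apply: sp_in; exists u', (y' * inU' v); split=> //.
exact: IH.
Qed.

Lemma Q_W' N Wp Wp' n (y : Cl N) v : Qn Wp Wp' n y -> Wp' v -> Qn Wp Wp' n.+1 (y * inU' v).
Proof. move=> hy hv; apply: sp_in; by exists v, y. Qed.

Lemma id_Q N (y : Cl N) (u v : 'I_N -> C) :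
  y * inU' v * inU u = pairing u v *: y - y * inU u * inU' v.
Proof. by rewrite -mulrA vu mulrBr -sAr mulr1 mulrA. Qed.

Lemma Q_W N Wp Wp' n (y : Cl N) u : Qn Wp Wp' n.+1 y -> Wp u -> Qn Wp Wp' n (y * inU u).
Proof.
elim: n y => [|n IH] y hy hu.
  move: y hy; apply: span_mr; first exact: gen_sub.
  move=> s [v' [g [hv' hg ->]]]; rewrite id_Q.
  have [_ hD hZ] := gen_sub (fun x : Cl N => exists u v, [/\ Wp u, Wp' v & x = inU u * inU' v]).
  apply: hD; first exact: hZ.
  rewrite -scaleN1r; apply: hZ; apply: (@P_W' _ _ _ 0) => //; exact: C1.
move: y hy; apply: span_mr; first exact: span_sub.
move=> s [v' [y' [hv' hy' ->]]]; rewrite id_Q.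
apply: sp_add; first by apply: sp_scale.
rewrite -scaleN1r; apply: sp_scale; apply: sp_in; exists v', (y' * inU u); split=> //.
exact: IH.
Qed.

Lemma A_W N Wp Wp' k (y : Cl N) u : An Wp Wp' k y -> Wp u -> An Wp Wp' (k + 1) (y * inU u).
Proof.
case: k => n hy hu.
  have -> : (Posz n + 1 = Posz n.+1)%R by rewrite -addn1 PoszD.
  exact: P_W.
case: n hy => [|m] hy.
  have -> : (Negz 0 + 1 = Posz 0)%R by [].
  exact: (Q_W (n := 0)).
have -> : (Negz m.+1 + 1 = Negz m)%R by rewrite !NegzE -(addn1 m.+1) PoszD opprD addrNK.
exact: Q_W.
Qed.

Lemma A_W' N Wp Wp' k (y : Cl N) v : An Wp Wp' k y -> Wp' v -> An Wp Wp' (k - 1) (y * inU' v).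
Proof.
case: k => n hy hv.
  case: n hy => [|m] hy.
    have -> : (Posz 0 - 1 = Negz 0)%R by [].
    exact: (Q_W' (n := 0)).
  have -> : (Posz m.+1 - 1 = Posz m)%R by rewrite -addn1 PoszD addrK.
  exact: P_W'.
have -> : (Negz n - 1 = Negz n.+1)%R by rewrite !NegzE -(addn1 n.+1) PoszD opprD.
exact: Q_W'.
Qed.

Lemma A_G0 N Wp Wp' (g : Cl N) : G0 Wp Wp' g ->
  forall k y, An Wp Wp' k y -> An Wp Wp' k (y * g).
Proof.
elim=> {g}.
- move=> g [u [v [hu hv ->]]] k y hy; rewrite mulrA.
  have -> : k = k + 1 - 1 by rewrite addrK.
  apply: A_W' => //; exact: A_W.
- by move=> k y hy; rewrite mulr1.
- move=> a b _ ha _ hb k y hy; rewrite mulrDr.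
  by have [_ hD _] := An_sub Wp Wp' k; apply: hD; [apply: ha | apply: hb].
- move=> c a _ ha k y hy; rewrite -sAr.
  by have [_ _ hZ] := An_sub Wp Wp' k; apply: hZ; apply: ha.
- by move=> a b _ ha _ hb k y hy; rewrite mulrA; apply: hb; apply: ha.
Qed.

Lemma A_P N Wp Wp' n : forall k (x y : Cl N), An Wp Wp' k x -> Pn Wp Wp' n y ->
  An Wp Wp' (k + n) (x * y).
Proof.
elim: n => [|n IH] k x y hx hy.
  by rewrite addr0; apply: A_G0.
move: y hy; apply: span_ml; first exact: An_sub.
move=> s [u [y' [hu hy' ->]]]; rewrite mulrA.
have -> : k + Posz n.+1 = (k + 1) + Posz n by rewrite -addn1 PoszD addrAC addrA.
apply: IH => //; exact: A_W.
Qed.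

Lemma A_Q N Wp Wp' n : forall k (x y : Cl N), An Wp Wp' k x -> Qn Wp Wp' n y ->
  An Wp Wp' (k - Posz n) (x * y).
Proof.
elim: n => [|n IH] k x y hx hy.
  by rewrite subr0; apply: A_G0.
move: y hy; apply: span_ml; first exact: An_sub.
move=> s [v [y' [hv hy' ->]]]; rewrite mulrA.
have -> : k - Posz n.+1 = (k - Posz n) - 1 by rewrite -addn1 PoszD opprD addrA.
apply: A_W' => //; exact: IH.
Qed.

Lemma A_mul N Wp Wp' k m (x y : Cl N) : An Wp Wp' k x -> An Wp Wp' m y ->
  An Wp Wp' (k + m) (x * y).
Proof.
case: m => n hx hy; first exact: A_P.
have -> : k + Negz n = k - Posz n.+1 by rewrite NegzE.
exact: A_Q.
Qed.

Definition ClW' N (Wp Wp' : ('I_N -> C) -> Prop) :=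
  gen_alg (fun x : Cl N => (exists2 u, Wp u & x = inU u) \/ (exists2 v, Wp' v & x = inU' v)).

Lemma An0 N Wp Wp' k : @An N Wp Wp' k 0.
Proof. by have [h _ _] := An_sub Wp Wp' k. Qed.

Lemma ClW_proj N Wp Wp' (x : Cl N) : ClW' Wp Wp' x -> forall k, An Wp Wp' k (projk k x).
Proof.
elim=> {x}.
- move=> x [[u hu ->]|[v hv ->]] k.
    rewrite (proj_homE _ (hom_inU u)); case: eqP => [<-|_]; last exact: An0.
    rewrite -(mulr1 (inU u)); apply: sp_in; exists u, 1; split=> //; exact: ga_one.
  rewrite (proj_homE _ (hom_inU' v)); case: eqP => [<-|_]; last exact: An0.
  rewrite -(mul1r (inU' v)); apply: sp_in; exists v, 1; split=> //; exact: ga_one.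
- move=> k; rewrite (proj_homE _ (@hom1 N)); case: eqP => [<-|_]; last exact: An0.
  exact: ga_one.
- move=> x y _ hx _ hy k; rewrite proj_add.
  by have [_ hD _] := An_sub Wp Wp' k; apply: hD.
- move=> c x _ hx k; rewrite proj_scale.
  by have [_ _ hZ] := An_sub Wp Wp' k; apply: hZ.
- move=> x y _ hx _ hy k; rewrite proj_mul.
  apply: subsp_sum; first exact: An_sub.
  move=> m _; apply: subsp_sum; first exact: An_sub.
  move=> m' _; case: eqP => [<-|_]; last exact: An0.
  exact: A_mul.
Qed.

Lemma part2 N Wp Wp' (x : Cl N) :
  (ClW' Wp Wp' x /\ homd 0 x) <-> G0 Wp Wp' x.
Proof.
split.
  case=> hx h0; have := ClW_proj hx 0.
  by rewrite (proj_homE _ h0) eqxx.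
elim=> {x}.
- move=> x [u [v [hu hv ->]]]; split.
    apply: ga_mul; apply: ga_gen; [left; by exists u | right; by exists v].
  have -> : (0 : int) = 1 + (-1) by [].
  apply: hom_mul; [exact: hom_inU | exact: hom_inU'].
- split; [exact: ga_one | exact: hom1].
- move=> x y _ [h1 h2] _ [h3 h4]; split; [exact: ga_add | exact: hom_add].
- move=> c x _ [h1 h2]; split; [exact: ga_scale | exact: hom_scale].
- move=> x y _ [h1 h2] _ [h3 h4]; split; first exact: ga_mul.
  rewrite -(addr0 0); exact: hom_mul.
Qed.


Lemma gl_core N (ai bj ak bl : Cl N) (cjk cli : C) :
  bj * ak = cjk *: (1 : Cl N) - ak * bj -> bl * ai = cli *: (1 : Cl N) - ai * bl ->
  ai * ak = - (ak * ai) -> bj * bl = - (bl * bj) ->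
  ai * bj * (ak * bl) - ak * bl * (ai * bj) = cjk *: (ai * bl) - cli *: (ak * bj).
Proof.
move=> h1 h2 h3 h4.
have e1 : ai * bj * (ak * bl) = cjk *: (ai * bl) - ai * ak * (bj * bl).
  by rewrite mulrA -(mulrA ai bj ak) h1 mulrBr mulrBl -sAr mulr1 -sAl !mulrA.
have e2 : ak * bl * (ai * bj) = cli *: (ak * bj) - ak * ai * (bl * bj).
  by rewrite mulrA -(mulrA ak bl ai) h2 mulrBr mulrBl -sAr mulr1 -sAl !mulrA.
rewrite e1 e2 h3 h4 mulNr mulrN opprK.
by rewrite opprB addrA subrK.
Qed.

Lemma inU_lin N d (u : 'I_N -> C) (c : 'I_d -> C) (f : 'I_d -> 'I_N -> C) :
  (forall k, u k = \sum_i c i * f i k) -> inU u = \sum_i c i *: inU (f i).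
Proof.
move=> h; rewrite /inU.
under eq_bigr => k _ do rewrite h scaler_suml.
rewrite exchange_big /=; apply: eq_bigr => i _.
rewrite scaler_sumr; apply: eq_bigr => k _; by rewrite scalerA.
Qed.
Lemma inU'_lin N d (u : 'I_N -> C) (c : 'I_d -> C) (f : 'I_d -> 'I_N -> C) :
  (forall k, u k = \sum_i c i * f i k) -> inU' u = \sum_i c i *: inU' (f i).
Proof.
move=> h; rewrite /inU'.
under eq_bigr => k _ do rewrite h scaler_suml.
rewrite exchange_big /=; apply: eq_bigr => i _.
rewrite scaler_sumr; apply: eq_bigr => k _; by rewrite scalerA.
Qed.

Lemma gen_incl N (S S' : Cl N -> Prop) :
  (forall s, S s -> gen_alg S' s) -> forall x, gen_alg S x -> gen_alg S' x.
Proof.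
move=> h x; elim=> {x} //.
- exact: ga_one.
- by move=> *; apply: ga_add.
- by move=> *; apply: ga_scale.
- by move=> *; apply: ga_mul.
Qed.

Unset Implicit Arguments.
Theorem mainTheorem3 (N : nat) (z n : 'I_N -> C) :
  (0 < N)%N ->
  (forall i, z i != 0) ->
  (\prod_i z i) ^+ 2 - (\prod_i z i) ^- 2 != 0 ->
  (forall x : Cl N, (ClW z x /\ x * phiG n = phiG n * x) <->
                    (ClW z x /\ euler_deg0 x)) /\
  (forall x : Cl N, (ClW z x /\ euler_deg0 x) <-> gen_alg (prodWW' z) x) /\
  (forall (d : nat) (w w' : 'I_d -> 'I_N -> C),
     is_basis (inW z) w -> is_basis (inW' z) w' ->
     (forall i j, pairing (w i) (w' j) = (i == j)%:R) ->
     gl_relations (fun i j => inU (w i) * inU' (w' j)) /\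
     (forall i j, ClW z (inU (w i) * inU' (w' j))) /\
     (forall x : Cl N,
        gen_alg (fun y => exists i j, y = inU (w i) * inU' (w' j)) x <->
        (ClW z x /\ x * phiG n = phiG n * x))).
Proof.
move=> _ _ _.
have P1 : forall x : Cl N, (ClW z x /\ x * phiG n = phiG n * x) <->
                    (ClW z x /\ euler_deg0 x).
  move=> x; rewrite comm_phiG deg0_hom; tauto.
have P2 : forall x : Cl N, (ClW z x /\ euler_deg0 x) <-> gen_alg (prodWW' z) x.
  move=> x; rewrite deg0_hom; exact: (@part2 N (inW z) (inW' z) x).
split=> //; split=> //.
move=> d w w' [hw _ hspan] [hw' _ hspan'] hpair.
split.
  move=> i j k l.
  rewrite (gl_core (cjk := (j == k)%:R) (cli := (l == i)%:R)).
  - by congr (_ - _); case: eqP; rewrite ?scale1r ?scale0r.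
  - by rewrite vu hpair eq_sym.
  - by rewrite vu hpair eq_sym.
  - exact: uu.
  - exact: vv.
split.
  move=> i j; apply: ga_mul; apply: ga_gen; [left; by exists (w i) | right; by exists (w' j)].
move=> x; rewrite P1 P2; split.
  apply: gen_incl => s [i [j ->]]; apply: ga_gen; exists (w i), (w' j); split=> //.
apply: gen_incl => s [u [v [hu hv ->]]].
have [c hc] := hspan u hu; have [c' hc'] := hspan' v hv.
rewrite (inU_lin hc) (inU'_lin hc') mul_sums.
apply: subsp_sum; first exact: gen_sub; move=> i _.
apply: subsp_sum; first exact: gen_sub; move=> j _.
rewrite sAlr; apply: ga_scale; apply: ga_gen; by exists i, j.
Qed.
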